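(* Let $a, b, n$ be positive integers with $b>1$, $n>1$, and suppose $S_a(b,n)$ is a numerical semigroup (equivalently $\gcd(r_b(n),a)=1$). Then $\{a_1, \ldots, a_n\}$ is the minimal system of generators of $S_a(b,n)$; in particular the embedding dimension of $S_a(b,n)$ is $n$.
   Context: For an integer $\ell \ge 1$, $r_b(\ell) = \sum_{j=0}^{\ell-1} b^j$, and $r_b(0)=0$. For $i \ge 1$, $a_i := r_b(n) + a\, r_b(i-1)$. $S_a(b,n)$ is the submonoid of $\mathbb{N}$ generated by $\{a_i: i\ge 1\}$. The minimal system of generators of a numerical semigroup is the unique generating set no proper subset of which generates it; the embedding dimension is its cardinality. *)

(* Defs.v *)
From mathcomp Require Import all_boot.
Set Implicit Arguments. Unset Strict Implicit. Unset Printing Implicit Defensive.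

Definition rb (b l : nat) : nat := \sum_(j < l) b ^ j.

Definition agen (a b n i : nat) : nat := rb b n + a * rb b (i - 1).

Inductive gen (G : nat -> Prop) : nat -> Prop :=
| gen0 : gen G 0
| genS : forall g x, G g -> gen G x -> gen G (g + x).

Definition Sab (a b n : nat) : nat -> Prop :=
  gen (fun y => exists i, 1 <= i /\ y = agen a b n i).

(* A submonoid S of N is a numerical semigroup iff N \ S is finite. *)
Definition numerical_semigroup (S : nat -> Prop) : Prop :=
  exists N, forall x, N <= x -> S x.

Definition generates (G S : nat -> Prop) : Prop := forall x, S x <-> gen G x.

Definition minimal_generators (G S : nat -> Prop) : Prop :=
  generates G S /\
  forall H : nat -> Prop, (forall x, H x -> G x) -> (exists x, G x /\ ~ H x) ->
    ~ generates H S.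

(* Main.v *)
Require Import Defs.
From mathcomp Require Import all_boot.
From mathcomp Require Import zify.

Lemma rbS b l : rb b l.+1 = rb b l + b ^ l.
Proof. by rewrite /rb big_ord_recr. Qed.

Lemma rb0 b : rb b 0 = 0.
Proof. by rewrite /rb big_ord0. Qed.

Lemma rbD b m l : rb b (m + l) = rb b m + b ^ m * rb b l.
Proof.
elim: l => [|l IH]; first by rewrite addn0 rb0 muln0 addn0.
by rewrite addnS !rbS IH expnD mulnDr addnA.
Qed.

Lemma rb_lt b l m : 0 < b -> l < m -> rb b l < rb b m.
Proof.
move=> hb; elim: m => [//|m IH]; rewrite ltnS leq_eqVlt => /orP [/eqP ->|/IH h].
  by rewrite rbS -[X in X < _]addn0 ltn_add2l expn_gt0 hb.
by rewrite rbS (leq_trans h) // leq_addr.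
Qed.

Lemma rb_inj b l m : 0 < b -> rb b l = rb b m -> l = m.
Proof.
move=> hb e; case: (ltngtP l m) => // h.
  by move: (@rb_lt b _ _ hb h); rewrite e ltnn.
by move: (@rb_lt b _ _ hb h); rewrite e ltnn.
Qed.

Lemma gen_add G x y : gen G x -> gen G y -> gen G (x + y).
Proof.
elim=> [//|g x' Gg _ IH] hy; rewrite -addnA; exact: genS Gg (IH hy).
Qed.

Lemma gen_mul G c x : gen G x -> gen G (c * x).
Proof.
move=> hx; elim: c => [|c IH]; first by rewrite mul0n; exact: gen0.
by rewrite mulSn; apply: gen_add.
Qed.

Lemma gen_closed (G G' : nat -> Prop) : (forall g, G g -> gen G' g) ->
  forall x, gen G x -> gen G' x.
Proof.
move=> h x; elim=> [|g x' Gg _ IH]; first exact: gen0.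
exact: gen_add (h _ Gg) IH.
Qed.

Lemma gen1 (G : nat -> Prop) g : G g -> gen G g.
Proof. move=> Gg; rewrite -[g]addn0; exact: genS Gg (gen0 _). Qed.

Theorem theorem6 (a b n : nat) (ha : 0 < a) (hb : 1 < b) (hn : 1 < n)
  (hS : numerical_semigroup (Sab a b n)) :
  minimal_generators (fun y => exists i, 1 <= i <= n /\ y = agen a b n i) (Sab a b n)
  /\ (forall i j, 1 <= i <= n -> 1 <= j <= n -> agen a b n i = agen a b n j -> i = j).
Proof.
have hb0 : 0 < b by lia.
set R := rb b n.
have Rpos : 0 < R.
  have := @rb_lt b 0 n hb0; rewrite rb0 /R; apply; lia.
have inj : forall i j, 1 <= i -> 1 <= j -> agen a b n i = agen a b n j -> i = j.
  move=> i j hi hj; rewrite /agen => /eqP; rewrite eqn_add2l eqn_pmul2l // => /eqP.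
  move/(@rb_inj b _ _ hb0); lia.
have cop : coprime R a.
  case: hS => N hN.
  have dv : forall x, Sab a b n x -> gcdn R a %| x.
    move=> x; elim=> [|g x' [i [_ ->]] _ IH]; first exact: dvdn0.
    by rewrite /agen -/R dvdn_add // ?dvdn_add ?dvdn_gcdl // dvdn_mulr // dvdn_gcdr.
  have h1 := dv _ (hN N (leqnn N)).
  have h2 := dv _ (hN N.+1 (leqnSn N)).
  by rewrite /coprime -dvdn1; rewrite -addn1 dvdn_addr in h2.
split; last by move=> i j /andP [hi _] /andP [hj _]; apply: inj.
split.
  move=> x; split; last first.
    apply: gen_closed => g [i [/andP [hi _] ->]]; apply: gen1; by exists i.
  apply: gen_closed => g [i [hi ->]].
  elim: i {-2}i (leqnn i) hi => [|m IH] i hm hi; first lia.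
  case: (leqP i n) => hin.
    by apply: gen1; exists i; rewrite hi hin.
  have -> : agen a b n i = agen a b n (i - n) + (a * b ^ (i - n - 1)) * agen a b n 1.
    rewrite /agen subnn rb0 muln0 addn0.
    have -> : i - 1 = (i - n - 1) + n by lia.
    rewrite rbD -/R.
    rewrite mulnDr -!mulnA addnA; congr (_ + _); lia.
  apply: gen_add; last apply: gen_mul.
    apply: IH; lia.
  apply: gen1; exists 1; split => //; lia.
move=> H HG [x [[i [hi ->]] nH]] gH.
have si : Sab a b n (agen a b n i).
  apply: gen1; exists i; split => //; lia.
have := (gH _).1 si.
pose G' := fun y => exists j, 1 <= j <= n /\ j <> i /\ y = agen a b n j.
have sub : forall y, gen H y -> gen G' y.
  apply: gen_closed => g Hg; apply: gen1.
  have [j [hj e]] := HG _ Hg; exists j; split => //; split => // eji.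
  by apply: nH; rewrite -eji -e.
move/sub.
have inv : forall y, gen G' y -> exists k s, y = k * R + a * s /\
   (k = 0 -> y = 0) /\ (k = 1 -> s <> rb b (i - 1)).
  move=> y; elim=> [|g y' [j [hj [hji ->]]] _ [k [s [ey [h0 h1]]]]].
    by exists 0, 0; split => //; rewrite muln0.
  exists k.+1, (rb b (j - 1) + s); split.
    by rewrite ey /agen mulSn mulnDr; lia.
  split => // ek.
  have k0 : k = 0 by lia.
  have s0 : s = 0.
    have := h0 k0; rewrite ey k0 mul0n add0n => /eqP; rewrite muln_eq0; lia.
  rewrite s0 addn0 => /(@rb_inj b _ _ hb0); lia.
move=> /inv [k [s [e [h0 h1]]]].
have ri : rb b (i - 1) < R by apply: rb_lt; lia.
move: e; rewrite /agen -/R => e.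
case: k e h0 h1 => [|[|k]] e h0 h1.
- by move: (h0 erefl); rewrite /agen -/R; lia.
- apply: (h1 erefl); move: e; rewrite mul1n => /eqP; rewrite eqn_add2l eqn_pmul2l //.
  by move/eqP.
- have e2 : a * (rb b (i - 1) - s) = k.+1 * R.
    rewrite mulnBr; lia.
  have dv : R %| a * (rb b (i - 1) - s) by rewrite e2 dvdn_mull.
  rewrite Gauss_dvdr // in dv.
  have pos : 0 < rb b (i - 1) - s.
    rewrite lt0n; apply/eqP => z; move: e2; rewrite z muln0; lia.
  have := dvdn_leq pos dv; lia.
Qed.
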